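(* Over $\mathsf{RCA}_0$, the Ordered Ramsey Theorem for pairs implies $\Sigma^0_2\text{-}\mathsf{IND}$.
   Context: $\mathsf{RCA}_0$: second-order arithmetic with $\Delta^0_1$-comprehension and $\Sigma^0_1$-induction. $\Sigma^0_2\text{-}\mathsf{IND}$: the induction scheme for $\Sigma^0_2$ formulae with parameters (equivalently over $\mathsf{RCA}_0$, for $\Pi^0_2$ formulae). Ordered Ramsey Theorem for pairs: if $(P,\preceq)$ is a finite partial order and $C:[\mathbb{N}]^2\to P$ satisfies $C(i,j)\succeq C(i,k)$ for all $i<j<k$, then there is an infinite $I\subseteq\mathbb{N}$ on which $C$ is constant. *)

(* Defs.v *)
(* ---------- Syntax (de Bruijn indices; number and set variables separate) *)

Inductive term : Type :=
| tvar (n : nat)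
| tzero
| tone
| tadd (a b : term)
| tmul (a b : term).

Inductive form : Type :=
| fEq  (a b : term)
| fLt  (a b : term)
| fMem (a : term) (X : nat)
| fNot (p : form)
| fAnd (p q : form)
| fOr  (p q : form)
| fImp (p q : form)
| fAll (p : form)
| fEx  (p : form)
| fBAll (t : term) (p : form)        (* ∀x < t, p ; t in the outer context     *)
| fBEx  (t : term) (p : form)
| fSAll (p : form)
| fSEx  (p : form).

Record structure : Type := {
  Num  : Type;
  Sets : Type;
  zero : Num;
  one  : Num;
  add  : Num -> Num -> Num;
  mul  : Num -> Num -> Num;
  lt   : Num -> Num -> Prop;
  mem  : Num -> Sets -> Prop
}.

Definition scons {A : Type} (a : A) (f : nat -> A) : nat -> A :=
  fun n => match n with O => a | Datatypes.S k => f k end.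

Fixpoint eval (A : structure) (rho : nat -> Num A) (t : term) : Num A :=
  match t with
  | tvar n => rho n
  | tzero => zero A
  | tone => one A
  | tadd a b => add A (eval A rho a) (eval A rho b)
  | tmul a b => mul A (eval A rho a) (eval A rho b)
  end.

Fixpoint sat (A : structure) (rho : nat -> Num A) (sig : nat -> Sets A)
  (p : form) : Prop :=
  match p with
  | fEq a b => eval A rho a = eval A rho b
  | fLt a b => lt A (eval A rho a) (eval A rho b)
  | fMem a X => mem A (eval A rho a) (sig X)
  | fNot p => ~ sat A rho sig p
  | fAnd p q => sat A rho sig p /\ sat A rho sig q
  | fOr p q => sat A rho sig p \/ sat A rho sig q
  | fImp p q => sat A rho sig p -> sat A rho sig q
  | fAll p => forall m, sat A (scons m rho) sig p
  | fEx p => exists m, sat A (scons m rho) sig p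
  | fBAll t p => forall m, lt A m (eval A rho t) -> sat A (scons m rho) sig p
  | fBEx t p => exists m, lt A m (eval A rho t) /\ sat A (scons m rho) sig p
  | fSAll p => forall X, sat A rho (scons X sig) p
  | fSEx p => exists X, sat A rho (scons X sig) p
  end.

Inductive Delta00 : form -> Prop :=
| D0Eq a b : Delta00 (fEq a b)
| D0Lt a b : Delta00 (fLt a b)
| D0Mem a X : Delta00 (fMem a X)
| D0Not p : Delta00 p -> Delta00 (fNot p)
| D0And p q : Delta00 p -> Delta00 q -> Delta00 (fAnd p q)
| D0Or p q : Delta00 p -> Delta00 q -> Delta00 (fOr p q)
| D0Imp p q : Delta00 p -> Delta00 q -> Delta00 (fImp p q)
| D0BAll t p : Delta00 p -> Delta00 (fBAll t p)
| D0BEx t p : Delta00 p -> Delta00 (fBEx t p).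

Inductive Sigma0 : nat -> form -> Prop :=
| Sig_D0 p : Delta00 p -> Sigma0 0 p
| Sig_Pi n p : Pi0 n p -> Sigma0 (Datatypes.S n) p
| Sig_Ex n p : Sigma0 (Datatypes.S n) p -> Sigma0 (Datatypes.S n) (fEx p)
with Pi0 : nat -> form -> Prop :=
| Pi_D0 p : Delta00 p -> Pi0 0 p
| Pi_Sig n p : Sigma0 n p -> Pi0 (Datatypes.S n) p
| Pi_All n p : Pi0 (Datatypes.S n) p -> Pi0 (Datatypes.S n) (fAll p).

(* Basic axioms (Simpson, SOSOA, Def. I.2.4 (i)). *)
Definition BasicAxioms (A : structure) : Prop :=
  (forall n : Num A, add A n (one A) <> zero A) /\
  (forall m n : Num A, add A m (one A) = add A n (one A) -> m = n) /\
  (forall m : Num A, add A m (zero A) = m) /\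
  (forall m n : Num A, add A m (add A n (one A)) = add A (add A m n) (one A)) /\
  (forall m : Num A, mul A m (zero A) = zero A) /\
  (forall m n : Num A, mul A m (add A n (one A)) = add A (mul A m n) m) /\
  (forall m : Num A, ~ lt A m (zero A)) /\
  (forall m n : Num A, lt A m (add A n (one A)) <-> (lt A m n \/ m = n)).

(* Induction for the formula p in its free number variable 0 (the other free
   variables are parameters, universally quantified). *)
Definition InductionFor (A : structure) (p : form) : Prop :=
  forall (rho : nat -> Num A) (sig : nat -> Sets A),
    sat A (scons (zero A) rho) sig p ->
    (forall m, sat A (scons m rho) sig p ->
               sat A (scons (add A m (one A)) rho) sig p) ->
    forall m, sat A (scons m rho) sig p.

Definition SigmaInduction (n : nat) (A : structure) : Prop :=
  forall p, Sigma0 n p -> InductionFor A p.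

Definition Delta01Comprehension (A : structure) : Prop :=
  forall p q, Sigma0 1 p -> Pi0 1 q ->
  forall (rho : nat -> Num A) (sig : nat -> Sets A),
    (forall m, sat A (scons m rho) sig p <-> sat A (scons m rho) sig q) ->
    exists X : Sets A, forall m, mem A m X <-> sat A (scons m rho) sig p.

Definition RCA0 (A : structure) : Prop :=
  BasicAxioms A /\ SigmaInduction 1 A /\ Delta01Comprehension A.

(* Cantor pairing as in RCA_0: (m,n) = (m+n)^2 + m. *)
Definition pr (A : structure) (m n : Num A) : Num A :=
  add A (mul A (add A m n) (add A m n)) m.

(* R (a set of codes of pairs, (a,b) ∈ R meaning a ⪯ b) is a partial order
   on the finite set P = {a | a < k}. *)
Definition FinPartialOrder (A : structure) (k : Num A) (R : Sets A) : Prop :=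
  (forall a, lt A a k -> mem A (pr A a a) R) /\
  (forall a b, lt A a k -> lt A b k ->
     mem A (pr A a b) R -> mem A (pr A b a) R -> a = b) /\
  (forall a b c, lt A a k -> lt A b k -> lt A c k ->
     mem A (pr A a b) R -> mem A (pr A b c) R -> mem A (pr A a c) R).

(* The set C codes a function C : [N]^2 -> P, ((i,j),c) ∈ C meaning C(i,j)=c. *)
Definition Coloring (A : structure) (k : Num A) (C : Sets A) : Prop :=
  forall i j, lt A i j ->
    exists c, lt A c k /\ mem A (pr A (pr A i j) c) C /\
      forall c', mem A (pr A (pr A i j) c') C -> c' = c.

Definition OrderedColoring (A : structure) (R C : Sets A) : Prop :=
  forall i j l c1 c2, lt A i j -> lt A j l ->
    mem A (pr A (pr A i j) c1) C -> mem A (pr A (pr A i l) c2) C ->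
    mem A (pr A c2 c1) R.

Definition ORT (A : structure) : Prop :=
  forall (k : Num A) (R C : Sets A),
    FinPartialOrder A k R -> Coloring A k C -> OrderedColoring A R C ->
    exists I : Sets A,
      (forall m, exists n, lt A m n /\ mem A n I) /\
      exists c, forall i j, mem A i I -> mem A j I -> lt A i j ->
        mem A (pr A (pr A i j) c) C.

(* Main.v *)
Require Import Defs.
From Stdlib Require Import List Lia Arith Classical FunctionalExtensionality.
Import ListNotations.

Fixpoint tren (xi : nat -> nat) (t : term) : term :=
  match t with
  | tvar n => tvar (xi n)
  | tzero => tzero | tone => tone
  | tadd a b => tadd (tren xi a) (tren xi b)
  | tmul a b => tmul (tren xi a) (tren xi b)
  end.

Definition up (xi : nat -> nat) (i : nat) : nat :=
  match i with O => O | S i => S (xi i) end.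

Fixpoint ren (xi : nat -> nat) (p : form) : form :=
  match p with
  | fEq a b => fEq (tren xi a) (tren xi b)
  | fLt a b => fLt (tren xi a) (tren xi b)
  | fMem a X => fMem (tren xi a) X
  | fNot p => fNot (ren xi p)
  | fAnd p q => fAnd (ren xi p) (ren xi q)
  | fOr p q => fOr (ren xi p) (ren xi q)
  | fImp p q => fImp (ren xi p) (ren xi q)
  | fAll p => fAll (ren (up xi) p)
  | fEx p => fEx (ren (up xi) p)
  | fBAll t p => fBAll (tren xi t) (ren (up xi) p)
  | fBEx t p => fBEx (tren xi t) (ren (up xi) p)
  | fSAll p => fSAll (ren xi p)
  | fSEx p => fSEx (ren xi p)
  end.

Lemma eval_tren A rho xi t : eval A rho (tren xi t) = eval A (fun i => rho (xi i)) t.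
Proof. induction t; simpl; congruence. Qed.

Lemma scons_up {X} (m : X) rho xi :
  (fun i => scons m rho (up xi i)) = scons m (fun i => rho (xi i)).
Proof. apply functional_extensionality; intros [|i]; reflexivity. Qed.

Lemma sat_ren A p : forall xi rho sig,
  sat A rho sig (ren xi p) <-> sat A (fun i => rho (xi i)) sig p.
Proof.
  induction p; intros xi rho sig; simpl; rewrite ?eval_tren;
  try reflexivity;
  try (rewrite ?IHp, ?IHp1, ?IHp2; tauto);
  try (split; intros H m; specialize (H m); rewrite IHp, scons_up in *; auto; fail);
  try (split; intros [m H]; exists m; rewrite IHp, scons_up in *; auto; fail);
  try (split; intros H m Hm; specialize (H m Hm); rewrite IHp, scons_up in *; auto; fail);
  try (split; intros [m [Hm H]]; exists m; split; auto; rewrite IHp, scons_up in *; auto; fail);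
  try (split; intros H X; specialize (H X); rewrite IHp in *; auto; fail);
  try (split; intros [X H]; exists X; rewrite IHp in *; auto; fail).
Qed.

Lemma D0_ren p xi : Delta00 p -> Delta00 (ren xi p).
Proof. intros H; revert xi; induction H; intros xi; simpl; constructor; auto. Qed.

Fixpoint app {X} (vs : list X) (r : nat -> X) : nat -> X :=
  match vs with [] => r | v :: vs => scons v (app vs r) end.

Lemma app_app {X} (u v : list X) r : app (u ++ v) r = app u (app v r).
Proof. induction u; simpl; congruence. Qed.

Lemma app_lt {X} (vs : list X) r i : i < length vs -> app vs r i = nth i vs (r 0).
Proof.
  revert i; induction vs; simpl; intros i Hi; [lia|].
  destruct i; simpl; auto. apply IHvs; lia.
Qed.

Lemma app_ge {X} (vs : list X) r i : length vs <= i -> app vs r i = r (i - length vs).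
Proof.
  revert i; induction vs; simpl; intros i Hi; [f_equal; lia|].
  destruct i; simpl; [lia|]. apply IHvs; lia.
Qed.

Lemma split_last {X} (l : list X) k : length l = S k ->
  exists l' x, l = l' ++ [x] /\ length l' = k.
Proof.
  intros H. destruct (exists_last (l:=l)) as [l' [x E]].
  { intro; subst; discriminate. }
  exists l', x; split; auto. subst. rewrite length_app in H; simpl in H; lia.
Qed.

Fixpoint iterEx k p := match k with O => p | S k => fEx (iterEx k p) end.
Fixpoint iterAll k p := match k with O => p | S k => fAll (iterAll k p) end.
Fixpoint iterBEx k m p := match k with O => p | S k => fBEx (tvar m) (iterBEx k (S m) p) end.
Fixpoint iterBAll k m p := match k with O => p | S k => fBAll (tvar m) (iterBAll k (S m) p) end.

Lemma app_snoc {X} (vs : list X) m r : app (vs ++ [m]) r = app vs (scons m r).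
Proof. rewrite app_app; reflexivity. Qed.

Lemma sat_iterEx A sig k p : forall rho,
  sat A rho sig (iterEx k p) <-> exists vs, length vs = k /\ sat A (app vs rho) sig p.
Proof.
  induction k; intros rho; simpl.
  - split; [intros H; exists []; auto | intros [vs [Hl H]]; destruct vs; simpl in *; auto; discriminate].
  - split.
    + intros [m H]. apply IHk in H as [vs [Hl H]]. exists (vs ++ [m]).
      rewrite app_snoc, length_app, Hl; simpl; split; auto; lia.
    + intros [vs [Hl H]]. destruct (split_last vs k Hl) as [l' [x [E Hl']]]; subst.
      exists x. apply IHk. exists l'. rewrite app_snoc in H; auto.
Qed.

Lemma sat_iterAll A sig k p : forall rho,
  sat A rho sig (iterAll k p) <-> forall vs, length vs = k -> sat A (app vs rho) sig p.
Proof.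
  induction k; intros rho; simpl.
  - split; [intros H vs Hl; destruct vs; simpl in *; auto; discriminate | intros H; apply (H []); auto].
  - split.
    + intros H vs Hl. destruct (split_last vs k Hl) as [l' [x [E Hl']]]; subst.
      rewrite app_snoc. apply IHk; auto.
    + intros H m. apply IHk. intros vs Hl. rewrite <- app_snoc. apply H.
      rewrite length_app, Hl; simpl; lia.
Qed.

Lemma sat_iterBEx A sig k p : forall m rho,
  sat A rho sig (iterBEx k m p) <-> exists vs, length vs = k /\ Forall (fun y => lt A y (rho m)) vs
     /\ sat A (app vs rho) sig p.
Proof.
  induction k; intros m rho; simpl.
  - split; [intros H; exists []; auto | intros [vs [Hl [_ H]]]; destruct vs; simpl in *; auto; discriminate].
  - split.
    + intros [y [Hy H]]. apply IHk in H as [vs [Hl [Hf H]]]. exists (vs ++ [y]).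
      rewrite app_snoc, length_app, Hl; simpl; repeat split; auto; try lia.
      apply Forall_app; split; auto.
    + intros [vs [Hl [Hf H]]]. destruct (split_last vs k Hl) as [l' [x [E Hl']]]; subst.
      apply Forall_app in Hf as [Hf1 Hf2]. inversion Hf2; subst.
      exists x; split; auto. apply IHk. exists l'. rewrite app_snoc in H; auto.
Qed.

Lemma sat_iterBAll A sig k p : forall m rho,
  sat A rho sig (iterBAll k m p) <-> forall vs, length vs = k -> Forall (fun y => lt A y (rho m)) vs
     -> sat A (app vs rho) sig p.
Proof.
  induction k; intros m rho; simpl.
  - split; [intros H vs Hl; destruct vs; simpl in *; auto; discriminate | intros H; apply (H []); auto].
  - split.
    + intros H vs Hl Hf. destruct (split_last vs k Hl) as [l' [x [E Hl']]]; subst.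
      apply Forall_app in Hf as [Hf1 Hf2]. inversion Hf2; subst.
      rewrite app_snoc. apply (IHk (S m) (scons x rho)); auto.
    + intros H y Hy. apply IHk. intros vs Hl Hf. rewrite <- app_snoc. apply H.
      rewrite length_app, Hl; simpl; lia. apply Forall_app; split; auto.
Qed.

Lemma D0_iterBEx k m p : Delta00 p -> Delta00 (iterBEx k m p).
Proof. revert m; induction k; simpl; intros; auto; constructor; auto. Qed.
Lemma D0_iterBAll k m p : Delta00 p -> Delta00 (iterBAll k m p).
Proof. revert m; induction k; simpl; intros; auto; constructor; auto. Qed.

Lemma Pi1_nf p : Pi0 1 p -> exists l q, Delta00 q /\ p = iterAll l q.
Proof.
  intros H. remember 1 as n. revert Heqn. induction H; intros E; try discriminate.
  - injection E; intros; subst. inversion H; subst. exists 0, p; auto.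
  - injection E; intros; subst. destruct (IHPi0 eq_refl) as [l [q [Hq ->]]].
    exists (S l), q; auto.
Qed.

Lemma Sig2_nf p : Sigma0 2 p -> exists k l q, Delta00 q /\ p = iterEx k (iterAll l q).
Proof.
  intros H. remember 2 as n. revert Heqn. induction H; intros E; try discriminate.
  - injection E; intros; subst. destruct (Pi1_nf p H) as [l [q [Hq ->]]]. exists 0, l, q; auto.
  - injection E; intros; subst. destruct (IHSigma0 eq_refl) as [k [l [q [Hq ->]]]].
    exists (S k), l, q; auto.
Qed.

Definition SetEnv (A : structure) := nat -> Sets A.
Existing Class SetEnv.
Existing Class BasicAxioms.
Existing Class SigmaInduction.

Section Arith.
Context {A : structure} {sg : SetEnv A} {BA : BasicAxioms A} {SI : SigmaInduction 1 A}.

Local Notation N := (Num A).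
Local Notation z := (zero A).
Local Notation sc x := (add A x (one A)).
Local Notation "x + y" := (add A x y).
Local Notation "x * y" := (mul A x y).
Local Notation "x < y" := (lt A x y).
Definition le (a b : N) := a < b \/ a = b.
Local Notation "x <= y" := (le x y).

Lemma succ_ne0 n : sc n <> z. Proof. destruct BA as (H&_); auto. Qed.
Lemma succ_inj m n : sc m = sc n -> m = n. Proof. destruct BA as (_&H&_); auto. Qed.
Lemma add_0_r m : m + z = m. Proof. destruct BA as (_&_&H&_); auto. Qed.
Lemma add_S_r m n : m + sc n = sc (m + n). Proof. destruct BA as (_&_&_&H&_); auto. Qed.
Lemma mul_0_r m : m * z = z. Proof. destruct BA as (_&_&_&_&H&_); auto. Qed.
Lemma mul_S_r m n : m * sc n = m * n + m. Proof. destruct BA as (_&_&_&_&_&H&_); auto. Qed.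
Lemma nlt0 m : ~ m < z. Proof. destruct BA as (_&_&_&_&_&_&H&_); auto. Qed.
Lemma lt_S m n : m < sc n <-> m < n \/ m = n. Proof. destruct BA as (_&_&_&_&_&_&_&H); auto. Qed.

Lemma D0_Sig1 p : Delta00 p -> Sigma0 1 p.
Proof. intros H; apply Sig_Pi, Pi_D0, H. Qed.

Lemma ind0 p : Delta00 p -> forall rho, sat A (scons z rho) sg p ->
  (forall m, sat A (scons m rho) sg p -> sat A (scons (sc m) rho) sg p) ->
  forall m, sat A (scons m rho) sg p.
Proof. intros H rho. apply (SI p (D0_Sig1 p H) rho sg). Qed.

Ltac indu P rho :=
  let H := fresh in
  pose proof (ind0 P ltac:(repeat constructor) rho) as H;
  cbn [sat eval scons] in H; apply H; clear H.

Lemma lt_trans a b c : a < b -> b < c -> a < c.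
Proof.
  revert c.
  indu (fImp (fLt (tvar 1) (tvar 2)) (fImp (fLt (tvar 2) (tvar 0)) (fLt (tvar 1) (tvar 0))))
       (scons a (scons b (fun _ => z))).
  - intros _ H. exfalso; eapply nlt0; eauto.
  - intros c IH H1 H2. apply lt_S in H2 as [H2|H2]; apply lt_S; left; subst; auto.
Qed.

Lemma lt_succ a : a < sc a. Proof. apply lt_S; auto. Qed.

Lemma lt_irrefl a : ~ a < a.
Proof.
  revert a. indu (fNot (fLt (tvar 0) (tvar 0))) (fun _ : nat => z).
  - apply nlt0.
  - intros m IH H. apply lt_S in H as [H|H].
    + apply IH. eapply lt_trans; [apply lt_succ|exact H].
    + apply IH. rewrite <- H at 2. apply lt_succ.
Qed.

Lemma le0 a : z < a \/ z = a.
Proof.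
  revert a. indu (fOr (fLt tzero (tvar 0)) (fEq tzero (tvar 0))) (fun _ : nat => z).
  - auto.
  - intros m [H|H]; left; apply lt_S; auto.
Qed.

Lemma lt_succ_le b a : b < a -> sc b < a \/ sc b = a.
Proof.
  revert a.
  indu (fImp (fLt (tvar 1) (tvar 0)) (fOr (fLt (tadd (tvar 1) tone) (tvar 0)) (fEq (tadd (tvar 1) tone) (tvar 0))))
       (scons b (fun _ => z)).
  - intros H; exfalso; eapply nlt0; eauto.
  - intros m IH H. apply lt_S in H as [H|H].
    + left. apply lt_S. destruct (IH H); auto.
    + subst. right; auto.
Qed.

Lemma trich a b : a < b \/ a = b \/ b < a.
Proof.
  revert b.
  indu (fOr (fLt (tvar 1) (tvar 0)) (fOr (fEq (tvar 1) (tvar 0)) (fLt (tvar 0) (tvar 1))))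
       (scons a (fun _ => z)).
  - destruct (le0 a) as [H|H]; auto.
  - intros m [H|[H|H]].
    + left; apply lt_S; auto.
    + left; apply lt_S; auto.
    + destruct (lt_succ_le _ _ H); auto.
Qed.

Lemma pred_or0 x : x = z \/ exists p, x = sc p.
Proof.
  pose (P := fEx (fOr (fEq (tvar 1) tzero) (fEq (tvar 1) (tadd (tvar 0) tone)))).
  assert (HP : Sigma0 1 P). { apply Sig_Ex, D0_Sig1; repeat constructor. }
  pose proof (SI P HP (fun _ => z) sg) as H. cbn [P sat eval scons] in H.
  assert (H2 : forall m, (exists p, m = z \/ m = sc p) -> exists p, sc m = z \/ sc m = sc p).
  { intros m _. exists m. auto. }
  destruct (H (ex_intro _ z (or_introl eq_refl)) H2 x) as [p [E|E]]; eauto.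
Qed.

Lemma lt_le_trans a b c : a < b -> b <= c -> a < c.
Proof. intros H [H'|H']; subst; eauto using lt_trans. Qed.
Lemma le_lt_trans a b c : a <= b -> b < c -> a < c.
Proof. intros [H'|H'] H; subst; eauto using lt_trans. Qed.
Lemma le_trans a b c : a <= b -> b <= c -> a <= c.
Proof. intros [H|H] H'; subst; auto. left; eapply lt_le_trans; eauto. Qed.
Lemma le_refl a : a <= a. Proof. right; auto. Qed.
Lemma lt_le a b : a < b -> a <= b. Proof. left; auto. Qed.
Lemma lt_nle a b : a < b -> ~ b <= a.
Proof. intros H [H'|H']; subst; eapply lt_irrefl; eauto using lt_trans. Qed.
Lemma nlt_le a b : ~ a < b -> b <= a.
Proof. intros H. destruct (trich a b) as [H'|[H'|H']]; [tauto|subst; apply le_refl|left; auto]. Qed.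
Lemma le_antisym a b : a <= b -> b <= a -> a = b.
Proof. intros [H|H] H'; auto. exfalso; eapply lt_nle; eauto. Qed.
Lemma lt_S_le a b : a < sc b -> a <= b.
Proof. intros H; apply lt_S in H; destruct H; [left|right]; auto. Qed.
Lemma le_S_lt a b : a <= b -> a < sc b.
Proof. intros [H|H]; apply lt_S; auto. Qed.
Lemma lt_S_mono a b : a < b -> sc a < sc b.
Proof. intros H. apply le_S_lt. destruct (lt_succ_le _ _ H); [left|right]; auto. Qed.

Lemma max2 a b : exists c, a <= c /\ b <= c.
Proof.
  destruct (trich a b) as [H|[H|H]]; [exists b|exists b|exists a]; subst; split; auto using le_refl, lt_le.
Qed.

Lemma bound_list (l : list N) : exists B, Forall (fun y => y < B) l.
Proof.
  induction l as [|y l [B HB]]. { exists z; constructor. }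
  destruct (max2 B (sc y)) as [C [H1 H2]]. exists (sc C). constructor.
  - apply (lt_trans _ (sc y)); [apply lt_succ|]. apply le_S_lt; auto.
  - eapply Forall_impl; [|exact HB]. intros x Hx. apply (lt_le_trans _ B); auto.
    left; apply le_S_lt; auto.
Qed.

Lemma add_0_l x : z + x = x.
Proof.
  revert x. indu (fEq (tadd tzero (tvar 0)) (tvar 0)) (fun _ : nat => z).
  - apply add_0_r.
  - intros m IH. rewrite add_S_r, IH; auto.
Qed.

Lemma add_S_l x y : sc x + y = sc (x + y).
Proof.
  revert y. indu (fEq (tadd (tadd (tvar 1) tone) (tvar 0)) (tadd (tadd (tvar 1) (tvar 0)) tone)) (scons x (fun _ => z)).
  - rewrite !add_0_r; auto.
  - intros m IH. rewrite !add_S_r, IH; auto.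
Qed.

Lemma add_comm x y : x + y = y + x.
Proof.
  revert y. indu (fEq (tadd (tvar 1) (tvar 0)) (tadd (tvar 0) (tvar 1))) (scons x (fun _ => z)).
  - rewrite add_0_r, add_0_l; auto.
  - intros m IH. rewrite add_S_r, add_S_l, IH; auto.
Qed.

Lemma add_assoc a b c : (a + b) + c = a + (b + c).
Proof.
  revert c. indu (fEq (tadd (tadd (tvar 1) (tvar 2)) (tvar 0)) (tadd (tvar 1) (tadd (tvar 2) (tvar 0))))
    (scons a (scons b (fun _ => z))).
  - rewrite !add_0_r; auto.
  - intros m IH. rewrite !add_S_r, IH; auto.
Qed.

Lemma add_cancel_l c a b : c + a = c + b -> a = b.
Proof.
  revert c. indu (fImp (fEq (tadd (tvar 0) (tvar 1)) (tadd (tvar 0) (tvar 2))) (fEq (tvar 1) (tvar 2)))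
    (scons a (scons b (fun _ => z))).
  - rewrite !add_0_l; auto.
  - intros m IH H. rewrite !add_S_l in H. apply IH, succ_inj, H.
Qed.

Lemma lt_add_r a b c : a < b -> a + c < b + c.
Proof.
  revert c. indu (fImp (fLt (tvar 1) (tvar 2)) (fLt (tadd (tvar 1) (tvar 0)) (tadd (tvar 2) (tvar 0))))
    (scons a (scons b (fun _ => z))).
  - rewrite !add_0_r; auto.
  - intros m IH H. rewrite !add_S_r. apply lt_S_mono; auto.
Qed.

Lemma le_add_r2 a b c : a <= b -> a + c <= b + c.
Proof. intros [H|H]; [left; apply lt_add_r; auto|subst; apply le_refl]. Qed.
Lemma le_add_l2 a b c : a <= b -> c + a <= c + b.
Proof. rewrite (add_comm c a), (add_comm c b). apply le_add_r2. Qed.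
Lemma le_add_both a b c d : a <= b -> c <= d -> a + c <= b + d.
Proof. intros H1 H2. eapply le_trans; [apply le_add_r2; eauto| apply le_add_l2; auto]. Qed.

Lemma le_add_r a n : a <= a + n.
Proof.
  rewrite <- (add_0_r a) at 1. apply le_add_l2. destruct (le0 n); [left|right]; auto.
Qed.
Lemma le_add_l a n : a <= n + a.
Proof. rewrite add_comm; apply le_add_r. Qed.

Lemma mul_0_l x : z * x = z.
Proof.
  revert x. indu (fEq (tmul tzero (tvar 0)) tzero) (fun _ : nat => z).
  - apply mul_0_r.
  - intros m IH. rewrite mul_S_r, IH, add_0_r; auto.
Qed.

Lemma mul_S_l x y : sc x * y = x * y + y.
Proof.
  revert y. indu (fEq (tmul (tadd (tvar 1) tone) (tvar 0)) (tadd (tmul (tvar 1) (tvar 0)) (tvar 0)))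
    (scons x (fun _ => z)).
  - rewrite !mul_0_r, add_0_r; auto.
  - intros m IH. rewrite !mul_S_r, IH, !add_S_r. f_equal.
    rewrite !add_assoc. f_equal. apply add_comm.
Qed.

Lemma le_mul_r u v w : u <= v -> u * w <= v * w.
Proof.
  revert w. indu (fImp (fOr (fLt (tvar 1) (tvar 2)) (fEq (tvar 1) (tvar 2)))
     (fOr (fLt (tmul (tvar 1) (tvar 0)) (tmul (tvar 2) (tvar 0))) (fEq (tmul (tvar 1) (tvar 0)) (tmul (tvar 2) (tvar 0)))))
    (scons u (scons v (fun _ => z))).
  - rewrite !mul_0_r; intros; right; auto.
  - intros m IH H. rewrite !mul_S_r. apply le_add_both; [apply IH, H|exact H].
Qed.

Lemma le_mul_l u v w : u <= v -> w * u <= w * v.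
Proof.
  revert w. indu (fImp (fOr (fLt (tvar 1) (tvar 2)) (fEq (tvar 1) (tvar 2)))
     (fOr (fLt (tmul (tvar 0) (tvar 1)) (tmul (tvar 0) (tvar 2))) (fEq (tmul (tvar 0) (tvar 1)) (tmul (tvar 0) (tvar 2)))))
    (scons u (scons v (fun _ => z))).
  - rewrite !mul_0_l; intros; right; auto.
  - intros m IH H. rewrite !mul_S_l. apply le_add_both; [apply IH, H|exact H].
Qed.

Lemma le_sq u : u <= u * u.
Proof.
  destruct (pred_or0 u) as [->|[p ->]]. { rewrite mul_0_r; apply le_refl. }
  rewrite mul_S_r. apply le_add_l.
Qed.

Definition prn (m n : N) := (m + n) * (m + n) + m.

Lemma prn_lt m n m' n' : m + n < m' + n' -> prn m n < prn m' n'.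
Proof.
  intros H. unfold prn. set (s := m + n) in *. set (s' := m' + n') in *.
  apply (le_lt_trans _ (s * s + s)). { apply le_add_l2. apply le_add_r. }
  apply (lt_le_trans _ (sc s * sc s)).
  - rewrite mul_S_r, mul_S_l, add_S_r. eapply le_lt_trans; [apply le_add_r|apply lt_succ].
  - eapply le_trans; [|apply le_add_r].
    assert (sc s <= s') by (destruct (lt_succ_le _ _ H); [left|right]; auto).
    eapply le_trans; [apply le_mul_r; eauto|apply le_mul_l; auto].
Qed.

Lemma prn_inj m n m' n' : prn m n = prn m' n' -> m = m' /\ n = n'.
Proof.
  intros E. destruct (trich (m + n) (m' + n')) as [H|[H|H]].
  - apply prn_lt in H. rewrite E in H. exfalso; eapply lt_irrefl; eauto.
  - unfold prn in E. rewrite H in E. apply add_cancel_l in E. subst. split; auto.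
    eapply add_cancel_l; eauto.
  - apply prn_lt in H. rewrite E in H. exfalso; eapply lt_irrefl; eauto.
Qed.

Lemma prn_ge1 m n : m <= prn m n.
Proof. unfold prn. apply le_add_l. Qed.
Lemma prn_ge2 m n : n <= prn m n.
Proof.
  unfold prn. eapply le_trans; [|apply le_add_r].
  eapply le_trans; [|apply le_sq]. apply le_add_l.
Qed.

End Arith.

Lemma sat_ren' A p xi rho rho' sig : (forall i, rho' (xi i) = rho i) ->
  (sat A rho' sig (ren xi p) <-> sat A rho sig p).
Proof.
  intros H. rewrite sat_ren. replace (fun i => rho' (xi i)) with rho; [tauto|].
  apply functional_extensionality; intros; rewrite H; auto.
Qed.

Section Gen.
Context {A : structure} {sg : SetEnv A} {BA : BasicAxioms A} {SI : SigmaInduction 1 A}.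

Local Notation N := (Num A).
Local Notation z := (zero A).
Local Notation sc x := (add A x (one A)).
Local Notation "x < y" := (lt A x y).
Local Notation "x <= y" := (le x y).

Lemma lnp q rho : Delta00 q -> forall a, sat A (scons a rho) sg q ->
  exists c, sat A (scons c rho) sg q /\ forall x, x < c -> ~ sat A (scons x rho) sg q.
Proof.
  intros Hq a Ha.
  pose (q1 := ren (fun i => match i with 0 => 0 | S t => S (S t) end) q).
  pose (q2 := ren (fun i => match i with 0 => 0 | S t => S (S (S t)) end) q).
  pose (L := fOr (fBEx (tvar 0) (fAnd q1 (fBAll (tvar 0) (fNot q2)))) (fBAll (tvar 0) (fNot q1))).
  assert (HL : Delta00 L) by (repeat constructor; apply D0_ren; auto).
  assert (E1 : forall c n, sat A (scons c (scons n rho)) sg q1 <-> sat A (scons c rho) sg q)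
    by (intros; apply sat_ren'; intros [|t]; reflexivity).
  assert (E2 : forall x c n, sat A (scons x (scons c (scons n rho))) sg q2 <-> sat A (scons x rho) sg q)
    by (intros; apply sat_ren'; intros [|t]; reflexivity).
  pose proof (ind0 L HL rho) as H. cbn [L sat eval scons] in H.
  setoid_rewrite E1 in H. setoid_rewrite E2 in H.
  destruct (H (or_intror (fun x Hx => False_ind _ (nlt0 x Hx)))) with (m := sc a) as [[c [_ [H1 H2]]]|H3].
  - intros m [[c [Hc [H1 H2]]]|H3].
    + left. exists c; repeat split; auto; try (apply lt_S; auto).
    + destruct (classic (sat A (scons m rho) sg q)) as [Hm|Hm].
      * left. exists m. split; [apply lt_succ; auto|]. split; auto.
      * right. intros x Hx. apply lt_S in Hx as [Hx|Hx]; [auto|subst; auto].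
  - exists c; auto.
  - exfalso. apply (H3 a); auto. apply lt_succ; auto.
Qed.

Lemma coll1 chi rho n : Delta00 chi ->
  (forall y b b', b <= b' -> sat A (scons b (scons y rho)) sg chi -> sat A (scons b' (scons y rho)) sg chi) ->
  (forall y, y < n -> exists b, sat A (scons b (scons y rho)) sg chi) ->
  exists b, forall y, y < n -> sat A (scons b (scons y rho)) sg chi.
Proof.
  intros Hc Hmono Hex.
  pose (xi := fun i => match i with 0 => 1 | 1 => 0 | S (S t) => S (S (S (S t))) end).
  pose (P := fEx (fBAll (tvar 1) (fImp (fLt (tvar 0) (tvar 3)) (ren xi chi)))).
  assert (HP : Sigma0 1 P). { apply Sig_Ex, D0_Sig1; repeat constructor; apply D0_ren; auto. }
  assert (E : forall y b n' , sat A (scons y (scons b (scons n' (scons n rho)))) sg (ren xi chi)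
      <-> sat A (scons b (scons y rho)) sg chi)
    by (intros; apply sat_ren'; intros [|[|t]]; reflexivity).
  pose proof (SI P HP (scons n rho) sg) as H. cbn [P sat eval scons] in H.
  setoid_rewrite E in H.
  destruct (H (ex_intro _ z (fun y Hy => False_ind _ (nlt0 y Hy)))) with (m := n) as [b Hb].
  - intros m [b Hb].
    destruct (classic (m < n)) as [Hm|Hm].
    + destruct (Hex m Hm) as [b2 Hb2]. destruct (max2 b b2) as [c [Hc1 Hc2]].
      exists c. intros y Hy Hyn. apply lt_S in Hy as [Hy|Hy].
      * apply (Hmono y b c Hc1); apply Hb; auto.
      * subst. apply (Hmono m b2 c Hc2 Hb2).
    + exists b. intros y Hy Hyn. apply lt_S in Hy as [Hy|Hy]; [auto|subst; contradiction].
  - exists b. intros y Hy. apply Hb; auto.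
Qed.

Definition swp (k i : nat) := if i =? k then S k else if i =? S k then k else i.

Lemma swp_env {X} (ys : list X) b y rho : forall i,
  app ys (scons b (scons y rho)) (swp (length ys) i) = app ys (scons y (scons b rho)) i.
Proof.
  intros i. unfold swp.
  destruct (Nat.eqb_spec i (length ys)).
  { subst. rewrite !app_ge by lia. rewrite Nat.sub_diag. replace (S (length ys) - length ys) with 1 by lia. reflexivity. }
  destruct (Nat.eqb_spec i (S (length ys))).
  { subst. rewrite !app_ge by lia. rewrite Nat.sub_diag. replace (S (length ys) - length ys) with 1 by lia. reflexivity. }
  destruct (Nat.lt_ge_cases i (length ys)).
  - rewrite !app_lt by lia. apply nth_indep; lia.
  - rewrite !app_ge by lia. destruct (i - length ys) as [|[|t]] eqn:Ei; try lia. reflexivity.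
Qed.

Lemma collk k : forall psi rho nidx, Delta00 psi ->
  (forall ys b b', length ys = k -> b <= b' -> sat A (app ys (scons b rho)) sg psi ->
      sat A (app ys (scons b' rho)) sg psi) ->
  (forall ys, length ys = k -> Forall (fun y => y < rho nidx) ys -> exists b, sat A (app ys (scons b rho)) sg psi) ->
  exists b, forall ys, length ys = k -> Forall (fun y => y < rho nidx) ys -> sat A (app ys (scons b rho)) sg psi.
Proof.
  induction k; intros psi rho nidx Hd Hmono Hex.
  - destruct (Hex [] eq_refl (Forall_nil _)) as [b Hb]. exists b.
    intros ys Hl _. destruct ys; [exact Hb|discriminate].
  - pose (psis := ren (swp k) psi).
    assert (E : forall ys b y rho', length ys = k ->
       sat A (app ys (scons b (scons y rho'))) sg psis <-> sat A (app (ys ++ [y]) (scons b rho')) sg psi).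
    { intros ys b y rho' Hl. rewrite app_snoc. apply sat_ren'. intros i. subst k. apply swp_env. }
    assert (StepA : forall y, y < rho nidx -> exists b, forall ys, length ys = k ->
        Forall (fun y => y < rho nidx) ys -> sat A (app ys (scons b (scons y rho))) sg psis).
    { intros y Hy. apply (IHk psis (scons y rho) (S nidx)).
      - apply D0_ren; auto.
      - intros ys b b' Hl Hb. rewrite !E by auto. apply Hmono; auto. rewrite length_app; simpl; lia.
      - intros ys Hl Hf. setoid_rewrite E; auto. apply Hex. rewrite length_app; simpl; lia.
        apply Forall_app; auto. }
    pose (chi := iterBAll k (S (S nidx)) psis).
    destruct (coll1 chi rho (rho nidx)) as [b Hb].
    + apply D0_iterBAll, D0_ren; auto.
    + intros y b b' Hbb. unfold chi. rewrite !sat_iterBAll. intros H ys Hl Hf.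
      apply E; auto. apply (Hmono _ b b'); auto. rewrite length_app; simpl; lia. apply E; auto.
    + intros y Hy. destruct (StepA y Hy) as [b Hb]. exists b. unfold chi. rewrite sat_iterBAll. exact Hb.
    + exists b. intros ys Hl Hf. destruct (split_last ys k Hl) as [l' [y [-> Hl']]].
      apply Forall_app in Hf as [Hf1 Hf2]. inversion Hf2; subst.
      apply E; auto. specialize (Hb y H1). unfold chi in Hb. rewrite sat_iterBAll in Hb. apply Hb; auto.
Qed.

End Gen.

Definition prt u v := tadd (tmul (tadd u v) (tadd u v)) u.

Section Main.
Context {A : structure} {sg : SetEnv A} {BA : BasicAxioms A} {SI : SigmaInduction 1 A}.
Variable DC : Delta01Comprehension A.
Variable HORT : ORT A.
Variables (k l : nat) (th : form) (rho0 : nat -> Num A) (a : Num A).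
Hypothesis Hth : Delta00 th.

Local Notation N := (Num A).
Local Notation z := (zero A).
Local Notation sc x := (add A x (one A)).
Local Notation "x < y" := (lt A x y).
Local Notation "x <= y" := (le x y).

Definition phi x := exists ys, length ys = k /\ forall zs, length zs = l ->
  sat A (app zs (app ys (scons x rho0))) sg th.

Hypothesis H0 : phi z.
Hypothesis Hs : forall m, phi m -> phi (sc m).
Hypothesis Ha : ~ phi a.

Definition gx r i := if i <=? k + l then i else i + r.
Definition Gf p q r := iterBEx k p (iterBAll l (q + k) (ren (gx r) th)).

Definition Gsem x i j := exists ys, length ys = k /\ Forall (fun y => y < i) ys /\
  forall zs, length zs = l -> Forall (fun w => w < j) zs -> sat A (app zs (app ys (scons x rho0))) sg th.

Lemma D0_Gf p q r : Delta00 (Gf p q r).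
Proof. apply D0_iterBEx, D0_iterBAll, D0_ren, Hth. Qed.

Lemma gx_env r (env : nat -> N) zs ys : length zs = l -> length ys = k ->
  (forall t, env (S r + t) = rho0 t) ->
  forall i, app zs (app ys env) (gx r i) = app zs (app ys (scons (env 0) rho0)) i.
Proof.
  intros Hzl Hy Hr i. rewrite <- !app_app. unfold gx.
  assert (Hl : length (zs ++ ys) = l + k) by (rewrite length_app; lia).
  destruct (Nat.leb_spec i (k + l)).
  - destruct (Nat.lt_ge_cases i (length (zs ++ ys))).
    + rewrite !app_lt by lia. apply nth_indep; lia.
    + rewrite !app_ge by lia. replace (i - length (zs ++ ys)) with 0 by lia. reflexivity.
  - rewrite !app_ge by lia. rewrite Hl. destruct (i - (l + k)) as [|t] eqn:E; [lia|].
    simpl. rewrite <- Hr. f_equal. lia.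
Qed.

Lemma Gf_sat p q r env : (forall t, env (S r + t) = rho0 t) ->
  (sat A env sg (Gf p q r) <-> Gsem (env 0) (env p) (env q)).
Proof.
  intros Hr. unfold Gf, Gsem. rewrite sat_iterBEx.
  split; intros [ys [Hy [Hf H]]]; exists ys; (split; [exact Hy|split; [exact Hf|]]).
  - rewrite sat_iterBAll in H. intro zs. intro Hzl. intro Hfz.
    rewrite app_ge in H by lia. replace (q + k - length ys) with q in H by lia.
    specialize (H zs Hzl Hfz). rewrite sat_ren' in H; eauto.
    intros i. apply gx_env; auto.
  - rewrite sat_iterBAll. intros zs Hzl Hfz.
    rewrite app_ge in Hfz by lia. replace (q + k - length ys) with q in Hfz by lia.
    rewrite (sat_ren' A th (gx r) (app zs (app ys (scons (env 0) rho0)))) by (intros i; apply gx_env; auto).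
    apply H; auto.
Qed.

Lemma G_stage x i j j' : Gsem x i j' -> j <= j' -> Gsem x i j.
Proof.
  intros [ys [Hy [Hf H]]] Hj. exists ys; split; [exact Hy|split; [exact Hf|]].
  intros zs Hzl Hfz. apply H; auto. apply (Forall_impl (P:=fun w => w < j)); [|exact Hfz]. intros w Hw.
  exact (lt_le_trans _ _ _ Hw Hj).
Qed.

Definition Color i j c := c <= a /\ (c = a \/ ~ Gsem c i j) /\ forall x, x < c -> Gsem x i j.

Lemma color_exists i j : exists c, Color i j c.
Proof.
  pose (q := fOr (fEq (tvar 0) (tvar 3)) (fNot (Gf 1 2 3))).
  assert (Hq : Delta00 q) by (repeat constructor; apply D0_Gf).
  assert (E : forall x, sat A (scons x (scons i (scons j (scons a rho0)))) sg q <-> (x = a \/ ~ Gsem x i j)).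
  { intros x. unfold q. cbn [sat eval scons]. rewrite Gf_sat by (intros; reflexivity). tauto. }
  destruct (lnp q (scons i (scons j (scons a rho0))) Hq a) as [c [H1 H2]].
  { apply E; auto. }
  rewrite E in H1. exists c. split; [|split; auto].
  - apply nlt_le. intros Hac. apply (H2 a Hac). apply E; auto.
  - intros x Hx. specialize (H2 x Hx). rewrite E in H2. apply NNPP. tauto.
Qed.

Lemma color_uniq i j c c' : Color i j c -> Color i j c' -> c = c'.
Proof.
  intros [H1 [H2 H3]] [H1' [H2' H3']].
  destruct (trich c c') as [H|[H|H]]; auto; exfalso.
  - destruct H2 as [H2|H2]; [subst; eapply lt_nle; eauto|apply H2, H3', H].
  - destruct H2' as [H2'|H2']; [subst; eapply lt_nle; eauto|apply H2', H3, H].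
Qed.

Lemma color_mono i j j' c1 c2 : j < j' -> Color i j c1 -> Color i j' c2 -> c2 <= c1.
Proof.
  intros Hj [H1 [H2 H3]] [H1' [H2' H3']]. apply nlt_le. intros H.
  destruct H2 as [H2|H2].
  - subst. eapply lt_nle; eauto.
  - apply H2. eapply G_stage; [apply H3', H|]. left; auto.
Qed.

Definition hx i := if i <? k + l then i else i + 2.

Lemma coll_final i0 x : (forall j, Gsem x i0 j) -> phi x.
Proof.
  intros HG. apply NNPP. intros Hn.
  pose (psi := iterBEx l k (fNot (ren hx th))).
  pose (rho := scons i0 (scons x rho0)).
  assert (E : forall ys b, length ys = k -> (sat A (app ys (scons b rho)) sg psi <->
     exists zs, length zs = l /\ Forall (fun w => w < b) zs /\ ~ sat A (app zs (app ys (scons x rho0))) sg th)).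
  { intros ys b Hy. unfold psi. rewrite sat_iterBEx. rewrite app_ge by lia.
    replace (k - length ys) with 0 by lia. cbn [scons].
    assert (EE : forall zs, length zs = l -> forall i,
       app zs (app ys (scons b rho)) (hx i) = app zs (app ys (scons x rho0)) i).
    { intros zs Hzl i. rewrite <- !app_app. unfold hx.
      assert (Hl : length (zs ++ ys) = l + k) by (rewrite length_app; lia).
      destruct (Nat.ltb_spec i (k + l)).
      - rewrite !app_lt by lia. apply nth_indep; lia.
      - rewrite !app_ge by lia. rewrite Hl. replace (i + 2 - (l + k)) with (S (S (i - (l + k)))) by lia.
        reflexivity. }
    split; intros [zs [Hzl [Hf H]]]; exists zs; (split; [exact Hzl|split; [exact Hf|]]); cbn [sat] in *;
      rewrite sat_ren' in *; eauto. }
  destruct (collk k psi rho 0) as [b Hb].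
  - apply D0_iterBEx. constructor. apply D0_ren, Hth.
  - intros ys b b' Hy Hbb. rewrite !E by auto. intros [zs [Hzl [Hf H]]]. exists zs; split; [exact Hzl|split; [|exact H]].
    apply (Forall_impl (P:=fun w => w < b)); [|exact Hf]. intros w Hw; exact (lt_le_trans _ _ _ Hw Hbb).
  - intros ys Hy Hf. assert (Hne : exists zs, length zs = l /\ ~ sat A (app zs (app ys (scons x rho0))) sg th).
    { apply NNPP. intros Hc. apply Hn. exists ys. split; auto. intros zs Hzl. apply NNPP. intros Hs'. apply Hc; eauto. }
    destruct Hne as [zs [Hzl Hs']]. destruct (bound_list zs) as [B HB]. exists B. apply E; auto. eauto.
  - destruct (HG b) as [ys [Hy [Hf H]]].
    specialize (Hb ys Hy Hf). apply E in Hb as [zs [Hzl [Hfz Hs']]]; auto.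
Qed.

Lemma phi_sat x : sat A (scons x rho0) sg (iterEx k (iterAll l th)) <-> phi x.
Proof.
  rewrite sat_iterEx. unfold phi. split; intros [ys [Hy H]]; exists ys; split; auto;
  [rewrite sat_iterAll in H|rewrite sat_iterAll]; auto.
Qed.

Definition RF := fBEx (tadd (tvar 0) tone) (fBEx (tadd (tvar 1) tone)
  (fAnd (fEq (tvar 2) (prt (tvar 1) (tvar 0))) (fOr (fLt (tvar 1) (tvar 0)) (fEq (tvar 1) (tvar 0))))).

Lemma exR : exists R, forall u v, mem A (pr A u v) R <-> u <= v.
Proof.
  assert (HRF : Delta00 RF) by (repeat constructor).
  destruct (DC RF RF (D0_Sig1 RF HRF) (Pi_Sig 0 RF (Sig_D0 RF HRF)) rho0 sg (fun m => iff_refl _)) as [R HR].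
  exists R. intros u v. rewrite HR. unfold RF, prt. cbn [sat eval scons]. split.
  - intros [u' [_ [v' [_ [E H]]]]].
    assert (E' : prn u v = prn u' v') by exact E. apply prn_inj in E' as [-> ->]. exact H.
  - intros H. exists u. split.
    + apply le_S_lt. apply (prn_ge1 u v).
    + exists v. split; [apply le_S_lt; apply (prn_ge2 u v)|]. split; [reflexivity|exact H].
Qed.

Definition ColorF := fAnd (fOr (fLt (tvar 0) (tvar 4)) (fEq (tvar 0) (tvar 4)))
  (fAnd (fOr (fEq (tvar 0) (tvar 4)) (fNot (Gf 2 1 4))) (fBAll (tvar 0) (Gf 3 2 5))).

Definition CF := fBEx (tadd (tvar 0) tone) (fBEx (tadd (tvar 1) tone) (fBEx (tadd (tvar 2) tone)
  (fAnd (fEq (tvar 3) (prt (prt (tvar 2) (tvar 1)) (tvar 0))) ColorF))).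

Lemma ColorF_sat c j i m : sat A (scons c (scons j (scons i (scons m (scons a rho0))))) sg ColorF <-> Color i j c.
Proof.
  assert (HB : forall x, sat A (scons x (scons c (scons j (scons i (scons m (scons a rho0)))))) sg (Gf 3 2 5)
     <-> Gsem x i j) by (intros; rewrite Gf_sat by (intros; reflexivity); reflexivity).
  unfold ColorF. cbn [sat eval scons]. setoid_rewrite HB.
  rewrite Gf_sat by (intros; reflexivity). cbn [scons]. unfold Color, le. tauto.
Qed.

Lemma exC : exists C, forall i j c, mem A (pr A (pr A i j) c) C <-> Color i j c.
Proof.
  assert (HCF : Delta00 CF) by (repeat constructor; apply D0_Gf).
  destruct (DC CF CF (D0_Sig1 CF HCF) (Pi_Sig 0 CF (Sig_D0 CF HCF)) (scons a rho0) sg (fun m => iff_refl _)) as [C HC].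
  exists C. intros i j c. rewrite HC. unfold CF. cbn [sat eval scons]. split.
  - intros [i' [_ [j' [_ [c' [_ [E H]]]]]]].
    assert (E' : prn (prn i j) c = prn (prn i' j') c') by exact E.
    apply prn_inj in E' as [E1 ->]. apply prn_inj in E1 as [-> ->].
    apply ColorF_sat in H. exact H.
  - intros H. exists i. split.
    { apply le_S_lt. eapply le_trans; [apply (prn_ge1 i j)|apply (prn_ge1 (prn i j) c)]. }
    exists j. split.
    { apply le_S_lt. eapply le_trans; [apply (prn_ge2 i j)|apply (prn_ge1 (prn i j) c)]. }
    exists c. split.
    { apply le_S_lt. apply (prn_ge2 (prn i j) c). }
    split; [reflexivity|]. apply ColorF_sat. exact H.
Qed.

Lemma contra : False.
Proof.
  destruct exR as [R HR]. destruct exC as [C HC].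
  destruct (HORT (sc a) R C) as [I [Hinf [c Hhom]]].
  - split; [|split].
    + intros x _. apply HR. apply le_refl.
    + intros x y _ _ H1 H2. apply HR in H1. apply HR in H2. apply le_antisym; auto.
    + intros x y w _ _ _ H1 H2. apply HR. apply HR in H1. apply HR in H2. eapply le_trans; eauto.
  - intros i j _. destruct (color_exists i j) as [c Hc]. exists c. split; [apply le_S_lt, Hc|].
    split; [apply HC; auto|]. intros c' Hc'. apply HC in Hc'. eapply color_uniq; eauto.
  - intros i j w c1 c2 Hij Hjw H1 H2. apply HC in H1. apply HC in H2. apply HR. eapply color_mono; eauto.
  - assert (Hcol : forall i j, mem A i I -> mem A j I -> i < j -> Color i j c) by (intros; apply HC; auto).
    destruct (Hinf z) as [i1 [_ Hi1]]. destruct (Hinf i1) as [j1 [Hij1 Hj1]].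
    pose proof (Hcol _ _ Hi1 Hj1 Hij1) as [Hca _].
    assert (Hnc : ~ phi c).
    { intros [ys [Hy Hph]]. destruct Hca as [Hca|Hca]; [|subst; apply Ha; exists ys; auto].
      destruct (bound_list ys) as [B HB]. destruct (Hinf B) as [i [HBi Hi]].
      destruct (Hinf i) as [j [Hij Hj]].
      destruct (Hcol i j Hi Hj Hij) as [_ [[E|Hng] _]].
      - subst. eapply lt_irrefl; eauto.
      - apply Hng. exists ys. split; auto. split.
        + apply (Forall_impl (P:=fun y => y < B)); [|exact HB]. intros y Hy'. eapply lt_trans; eauto.
        + intros zs Hzl _. apply Hph; auto. }
    destruct (pred_or0 c) as [E|[c' E]].
    + subst; auto.
    + apply Hnc. rewrite E. apply Hs. apply (coll_final i1). intros j.
      destruct (max2 i1 j) as [D [HD1 HD2]]. destruct (Hinf D) as [j' [HDj Hj']].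
      destruct (Hcol i1 j' Hi1 Hj' (le_lt_trans _ _ _ HD1 HDj)) as [_ [_ Hall]].
      apply (G_stage _ _ _ j').
      * apply Hall. rewrite E. apply lt_succ.
      * left. eapply le_lt_trans; eauto.
Qed.

End Main.

Theorem mainTheorem6 :
  forall A : structure, RCA0 A -> ORT A -> SigmaInduction 2 A.
Proof.
  intros A [BA [SI DC]] HORT p Hp.
  destruct (Sig2_nf p Hp) as [k [l [th [Hth ->]]]].
  intros rho sig H0 Hs m. apply NNPP. intros Ha.
  apply (@contra A sig BA SI DC HORT k l th rho m Hth).
  - apply phi_sat; auto.
  - intros x Hx. apply phi_sat. apply Hs. apply phi_sat. exact Hx.
  - intros Hm. apply Ha. apply phi_sat. exact Hm.
Qed.
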